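(* For every integer $i \ge 0$ and every integer $\nu \ge 0$, the following two identities hold: \[ \sum_{k=0}^{2\nu} (-1)^{k}\, \binom{2\nu+i}{k+i}\, 2^{-k}\, \binom{2k}{k} =\pi\,(2\nu+1)_{i}\,\frac{2^{2i}\, i!}{(2i)!}\,\sum_{r=0}^{i}\frac{2^{-r}\,\binom{i}{r}\, \left(\tfrac12+\tfrac12(i-r)\right)_{\nu}}{(i-r)!\,\Gamma^{2}\!\left(\tfrac12+\tfrac12(r-i)\right)\,\left(1+\tfrac12(i-r)\right)_{\nu}} \] and \[ \sum_{k=0}^{2\nu+1} (-1)^{k}\, \binom{2\nu+1+i}{k+i}\, 2^{-k}\, \binom{2k}{k} =2\pi\,(2\nu+2)_{i}\,\frac{2^{2i}\, i!}{(2i)!}\,\sum_{r=0}^{i}\frac{2^{-r}\,\binom{i}{r}\, \left(1+\tfrac12(i-r)\right)_{\nu}}{(i-r+1)!\,\Gamma^{2}\!\left(\tfrac12(r-i)\right)\,\left(\tfrac32+\tfrac12(i-r)\right)_{\nu}}. \]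
   Context: For a complex number $a$ and integer $n\ge 0$, $(a)_n$ denotes the Pochhammer symbol: $(a)_0=1$ and $(a)_n=a(a+1)\cdots(a+n-1)$ for $n\ge1$. $\Gamma$ is Euler's gamma function; whenever $\Gamma$ is evaluated at a non-positive integer in a denominator, the corresponding term is interpreted as $0$ (i.e. $1/\Gamma(-m)=0$ for integers $m\ge 0$). *)

(* Defs.v *)
From Stdlib Require Import Reals.
From Coquelicot Require Import Coquelicot.
Open Scope R_scope.

Fixpoint poch (a : R) (n : nat) : R :=
  match n with
  | O => 1
  | S m => poch a m * (a + INR m)
  end.

Definition Gamma_pos (x : R) : R :=
  RInt_gen (fun t => Rpower t (x - 1) * exp (- t))
           (at_right 0) (Rbar_locally p_infty).

(** Number of shifts needed so that x + shift x > 0. *)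
Definition shift (x : R) : nat := Z.to_nat (up (- x)).

(** Reciprocal Gamma function, entire: 1/Gamma(x) = (x)_N / Gamma(x+N) for
    any N with x + N > 0 (functional equation).  At non-positive integers
    this is 0, matching the paper's convention 1/Gamma(-m) = 0. *)
Definition rGamma (x : R) : R :=
  poch x (shift x) / Gamma_pos (x + INR (shift x)).

Definition binom (n k : nat) : R := Binomial.C n k.

Definition sum0 (f : nat -> R) (n : nat) : R := sum_f_R0 f n.

(* Main.v *)
Require Import Defs.
From Coquelicot Require Import Coquelicot.
From Stdlib Require Import Reals Factorial Lra Lia ZArith.
Open Scope R_scope.


Definition gf (x : R) := exp (- (x * x)).
Definition Eh (x : R) := RInt gf 0 x.
Definition kf (x t : R) := exp (- (x * x) * (1 + t * t)) / (1 + t * t).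
Definition Kf (x : R) := RInt (kf x) 0 1.
Definition dk (x t : R) := -2 * x * exp (- (x * x) * (1 + t * t)).

Lemma gf_cont x : continuous gf x.
Proof. apply (@ex_derive_continuous R_AbsRing R_NormedModule gf). unfold gf. auto_derive. easy. Qed.

Lemma gf_ex a b : ex_RInt gf a b.
Proof. apply (@ex_RInt_continuous R_CompleteNormedModule). intros. apply gf_cont. Qed.

Lemma Eh_deriv x : is_derive Eh x (gf x).
Proof.
  apply is_derive_RInt with (a := 0).
  - apply filter_forall. intros b. apply (@RInt_correct R_CompleteNormedModule), gf_ex.
  - apply gf_cont.
Qed.

Lemma pos1 t : 0 < 1 + t * t.
Proof. nra. Qed.

Lemma kf_deriv x t : is_derive (fun u => kf u t) x (dk x t).
Proof.
  unfold kf, dk. pose proof (pos1 t).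
  auto_derive. lra. field. lra.
Qed.

Lemma kf_cont x t : continuous (kf x) t.
Proof. apply (@ex_derive_continuous R_AbsRing R_NormedModule (kf x)). unfold kf. pose proof (pos1 t). auto_derive. lra. Qed.

Lemma dk_cont2 x t : continuity_2d_pt dk x t.
Proof.
  unfold dk.
  apply continuity_2d_pt_mult.
  - apply continuity_2d_pt_mult. apply continuity_2d_pt_const. apply continuity_2d_pt_id1.
  - apply continuity_1d_2d_pt_comp with (f := exp) (g := fun u v => - (u * u) * (1 + v * v)).
    + apply derivable_continuous_pt, derivable_pt_exp.
    + apply continuity_2d_pt_mult.
      * apply continuity_2d_pt_opp, continuity_2d_pt_mult; apply continuity_2d_pt_id1.
      * apply continuity_2d_pt_plus. apply continuity_2d_pt_const.
        apply continuity_2d_pt_mult; apply continuity_2d_pt_id2.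
Qed.

Lemma Kf_deriv x : is_derive Kf x (RInt (dk x) 0 1).
Proof.
  assert (HD: forall u v, Derive (fun z => kf z v) u = dk u v).
  { intros. apply is_derive_unique, kf_deriv. }
  unfold Kf.
  rewrite <- (RInt_ext (fun t => Derive (fun u => kf u t) x)).
  2:{ intros. apply HD. }
  apply is_derive_RInt_param.
  - apply filter_forall. intros y t _. eexists. apply kf_deriv.
  - intros t _. apply continuity_2d_pt_ext with (f := dk). intros; symmetry; apply HD. apply dk_cont2.
  - apply filter_forall. intros y. apply (@ex_RInt_continuous R_CompleteNormedModule). intros. apply kf_cont.
Qed.


Lemma Eh_lin x : Eh x = RInt (fun t => x * gf (x * t)) 0 1.
Proof.
  unfold Eh.
  pose proof (@RInt_comp_lin R_CompleteNormedModule gf x 0 0 1 (gf_ex _ _)) as H.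
  replace (x * 0 + 0) with 0 in H by ring. replace (x * 1 + 0) with x in H by ring.
  rewrite <- H. apply RInt_ext. intros t _. rewrite Rplus_0_r. reflexivity.
Qed.

Lemma RInt_scal_R (f : R -> R) a b l : ex_RInt f a b -> RInt (fun x => l * f x) a b = l * RInt f a b.
Proof. intros H. exact (@RInt_scal R_CompleteNormedModule f a b l H). Qed.

Lemma dk_int x : RInt (dk x) 0 1 = -2 * gf x * Eh x.
Proof.
  rewrite Eh_lin. rewrite <- RInt_scal_R.
  - apply RInt_ext. intros t _. unfold dk, gf.
    replace (- (x * x) * (1 + t * t)) with (- (x * x) + - (x * t * (x * t))) by ring.
    rewrite exp_plus. change (@eq R (-2 * x * (exp (- (x * x)) * exp (- (x * t * (x * t))))) (-2 * exp (- (x * x)) * (x * exp (- (x * t * (x * t)))))). ring.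
  - apply (@ex_RInt_continuous R_CompleteNormedModule). intros.
    apply (@ex_derive_continuous R_AbsRing R_NormedModule (fun t => x * gf (x * t))).
    unfold gf. auto_derive. easy.
Qed.

Definition HH x := Eh x * Eh x + Kf x.

Lemma HH_deriv x : is_derive HH x 0.
Proof.
  unfold HH.
  apply is_derive_Reals.
  replace 0 with ((gf x * Eh x + Eh x * gf x) + RInt (dk x) 0 1).
  2:{ rewrite dk_int. ring. }
  apply derivable_pt_lim_plus.
  - apply derivable_pt_lim_mult; apply is_derive_Reals, Eh_deriv.
  - apply is_derive_Reals, Kf_deriv.
Qed.

Lemma HH_0 : HH 0 = PI / 4.
Proof.
  unfold HH, Eh. rewrite RInt_point. unfold zero; simpl.
  unfold Kf.
  assert (H: is_RInt (fun t => / (1 + t ^ 2)) 0 1 (minus (atan 1) (atan 0))).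
  { apply (@is_RInt_derive R_CompleteNormedModule).
    - intros t _. apply is_derive_Reals, derivable_pt_lim_atan.
    - intros t _. apply (@ex_derive_continuous R_AbsRing R_NormedModule (fun t => / (1 + t ^ 2))).
      auto_derive. pose proof (pos1 t). simpl. lra. }
  rewrite atan_1, atan_0 in H.
  assert (E: minus (PI / 4) 0 = PI / 4) by (unfold minus, plus, opp; simpl; ring).
  rewrite E in H.
  rewrite (RInt_ext _ (fun t => / (1 + t ^ 2))).
  - rewrite (is_RInt_unique _ _ _ _ H). ring.
  - intros t _. unfold kf. replace (- (0 * 0) * (1 + t * t)) with 0 by ring.
    rewrite exp_0. simpl. field. pose proof (pos1 t). lra.
Qed.

Lemma HH_const x : HH x = PI / 4.
Proof.
  rewrite <- HH_0.
  destruct (Rtotal_order 0 x) as [H|[H|H]].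
  - symmetry. apply eq_is_derive; auto. intros. apply HH_deriv.
  - subst; reflexivity.
  - apply eq_is_derive; auto. intros. apply HH_deriv.
Qed.


Lemma RInt_const_R a b (c : R) : RInt (fun _ => c) a b = (b - a) * c.
Proof. exact (@RInt_const R_CompleteNormedModule a b c). Qed.

Lemma RInt_c01 (c : R) : RInt (fun _ => c) 0 1 = c.
Proof. rewrite RInt_const_R. unfold Rminus. rewrite ?Ropp_0, ?Rplus_0_r, ?Rmult_1_l. reflexivity. Qed.
Lemma RInt_c0x (x : R) : RInt (fun _ => 1) 0 x = x.
Proof. rewrite RInt_const_R. unfold Rminus. rewrite ?Ropp_0, ?Rplus_0_r, ?Rmult_1_l. apply Rmult_1_r. Qed.

Lemma kf_ex x a b : ex_RInt (kf x) a b.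
Proof. apply (@ex_RInt_continuous R_CompleteNormedModule). intros. apply kf_cont. Qed.

Lemma cst_ex (c : R) a b : ex_RInt (fun _ => c) a b.
Proof. apply (@ex_RInt_continuous R_CompleteNormedModule). intros. apply continuous_const. Qed.

Lemma Kf_ge0 x : 0 <= Kf x.
Proof.
  apply RInt_ge_0. lra. apply kf_ex. intros t _. unfold kf.
  pose proof (pos1 t). pose proof (exp_pos (- (x * x) * (1 + t * t))).
  apply Rlt_le. apply Rdiv_lt_0_compat; lra.
Qed.

Lemma Kf_le x : Kf x <= gf x.
Proof.
  unfold Kf. replace (gf x) with (RInt (fun _ => gf x) 0 1) by apply RInt_c01.
  apply RInt_le. lra. apply kf_ex. apply cst_ex.
  intros t _. unfold kf, gf. pose proof (pos1 t).
  assert (exp (- (x * x) * (1 + t * t)) <= exp (- (x * x))).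
  { destruct (Req_dec (x * x * (t * t)) 0) as [E|E].
    - replace (- (x * x) * (1 + t * t)) with (- (x * x)) by nra. lra.
    - apply Rlt_le, exp_increasing. assert (0 <= x * x * (t * t)) by nra. nra. }
  pose proof (exp_pos (- (x * x) * (1 + t * t))).
  apply Rle_trans with (exp (- (x * x) * (1 + t * t))); auto.
  unfold Rdiv. rewrite <- (Rmult_1_r (exp (- (x * x) * (1 + t * t)))) at 2.
  apply Rmult_le_compat_l. lra.
  rewrite <- Rinv_1. apply Rinv_le_contravar; nra.
Qed.

Lemma Eh_ge0 x : 0 <= x -> 0 <= Eh x.
Proof.
  intros Hx. apply RInt_ge_0. auto. apply gf_ex. intros. unfold gf. apply Rlt_le, exp_pos.
Qed.

Lemma Eh_le x : 0 <= x -> Eh x <= x.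
Proof.
  intros Hx. unfold Eh. replace x with (RInt (fun _ => 1) 0 x) at 2 by apply RInt_c0x.
  apply RInt_le. auto. apply gf_ex. apply cst_ex.
  intros t _. unfold gf. rewrite <- exp_0. destruct (Req_dec t 0) as [->|E].
  - replace (- (0 * 0)) with 0 by ring. lra.
  - apply Rlt_le, exp_increasing. assert (0 < t * t) by nra. lra.
Qed.

Lemma Eh_close x : 0 <= x -> Rabs (Eh x - sqrt PI / 2) <= gf x / (sqrt PI / 2).
Proof.
  intros Hx. pose proof (HH_const x) as H. unfold HH in H.
  pose proof (Kf_ge0 x). pose proof (Kf_le x). pose proof (Eh_ge0 x Hx).
  assert (Hs: 0 < sqrt PI) by (apply sqrt_lt_R0, PI_RGT_0).
  assert (Hs2: sqrt PI * sqrt PI = PI) by (apply sqrt_sqrt; pose proof PI_RGT_0; lra).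
  set (s := sqrt PI / 2) in *.
  assert (Hss: s * s = PI / 4) by (unfold s; nra).
  assert (E: (Eh x - s) * (Eh x + s) = - Kf x) by nra.
  assert (Hp: 0 < Eh x + s) by (unfold s; lra).
  assert (E2: Eh x - s = - Kf x / (Eh x + s)) by (rewrite <- E; field; lra).
  rewrite E2. unfold Rdiv. rewrite Rabs_mult, Rabs_Ropp, Rabs_right by lra.
  rewrite Rabs_right by (apply Rle_ge, Rlt_le, Rinv_0_lt_compat; lra).
  apply Rmult_le_compat; try lra. apply Rlt_le, Rinv_0_lt_compat; lra.
  apply Rinv_le_contravar; unfold s in *; lra.
Qed.


Definition gam (t : R) := Rpower t (/ 2 - 1) * exp (- t).

Lemma chasles_R (f : R -> R) a b c : ex_RInt f a b -> ex_RInt f b c -> RInt f a b + RInt f b c = RInt f a c.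
Proof. intros. exact (@RInt_Chasles R_CompleteNormedModule f a b c H H0). Qed.

Lemma subst_int a b : 0 < a -> a <= b ->
  is_RInt gam a b (2 * (Eh (sqrt b) - Eh (sqrt a))).
Proof.
  intros Ha Hab.
  assert (HC := @is_RInt_comp R_CompleteNormedModule (fun u => 2 * gf u) sqrt (fun t => / (2 * sqrt t)) a b).
  assert (Hv: RInt (fun u => 2 * gf u) (sqrt a) (sqrt b) = 2 * (Eh (sqrt b) - Eh (sqrt a))).
  { rewrite RInt_scal_R by apply gf_ex. f_equal. unfold Eh.
    pose proof (chasles_R gf 0 (sqrt a) (sqrt b) (gf_ex _ _) (gf_ex _ _)) as E.
    lra. }
  rewrite <- Hv.
  eapply is_RInt_ext; [|apply HC].
  - intros y Hy. rewrite Rmin_left, Rmax_right in Hy by lra.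
    assert (0 < y) by lra.
    unfold gam, gf. unfold scal; simpl; unfold mult; simpl.
    rewrite sqrt_sqrt by lra.
    replace (/ 2 - 1) with (- / 2) by field. rewrite Rpower_Ropp, Rpower_sqrt by lra.
    pose proof (sqrt_lt_R0 y H). field. lra.
  - intros x _. apply (@ex_derive_continuous R_AbsRing R_NormedModule (fun u => 2 * gf u)).
    unfold gf. auto_derive. easy.
  - intros x Hx. rewrite Rmin_left, Rmax_right in Hx by lra. assert (0 < x) by lra. split.
    + apply is_derive_Reals, derivable_pt_lim_sqrt; auto.
    + apply (@ex_derive_continuous R_AbsRing R_NormedModule (fun t => / (2 * sqrt t))).
      auto_derive. pose proof (sqrt_lt_R0 x H). lra.
Qed.

Lemma ballR x e y : ball x e y <-> Rabs (y - x) < e.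
Proof. split; intro H; exact H. Qed.

Lemma exp_neg_le b : 0 < b -> exp (- b) < / b.
Proof.
  intros Hb. pose proof (exp_ineq1 b). assert (1 + b < exp b) by (apply H; lra).
  rewrite exp_Ropp. apply Rinv_lt_contravar. pose proof (exp_pos b). nra. lra.
Qed.

Lemma gam_gen : is_RInt_gen gam (at_right 0) (Rbar_locally p_infty) (sqrt PI).
Proof.
  apply filterlimi_lim_ext_loc with (f := fun ab => 2 * (Eh (sqrt (snd ab)) - Eh (sqrt (fst ab)))).
  - apply Filter_prod with (Q := fun a => 0 < a < 1) (R := fun b => 1 < b).
    + exists (mkposreal 1 Rlt_0_1). intros y Hy Hy0. assert (Hy': Rabs (y - 0) < 1) by exact Hy.
      rewrite Rminus_0_r, Rabs_right in Hy' by lra. lra.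
    + exists 1. auto.
    + intros x y Hx Hy. simpl. apply subst_int; lra.
  - apply filterlim_locally. intros eps.
    assert (Hs: 0 < sqrt PI) by (apply sqrt_lt_R0, PI_RGT_0).
    set (s := sqrt PI / 2).
    assert (Hs': 0 < s) by (unfold s; lra).
    set (e := pos eps). assert (He: 0 < e) by apply cond_pos.
    set (d := Rmin 1 ((e / 4) * (e / 4))).
    assert (Hd: 0 < d) by (unfold d; apply Rmin_pos; nra).
    apply Filter_prod with (Q := fun a => 0 < a < d) (R := fun b => 4 / (s * e) + 1 < b).
    + exists (mkposreal d Hd). intros y Hy Hy0. assert (Hy': Rabs (y - 0) < d) by exact Hy.
      rewrite Rminus_0_r, Rabs_right in Hy' by lra. lra.
    + exists (4 / (s * e) + 1). auto.
    + intros a b Ha Hb. change (Rabs (2 * (Eh (sqrt b) - Eh (sqrt a)) - sqrt PI) < e).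
      assert (Hq: 0 < 4 / (s * e)) by (apply Rdiv_lt_0_compat; nra).
      assert (Hb0: 0 < b) by lra.
      pose proof (Eh_close (sqrt b) (sqrt_pos b)) as C1.
      fold s in C1. unfold gf in C1. rewrite sqrt_sqrt in C1 by lra.
      pose proof (exp_neg_le b Hb0) as C2.
      assert (C3: / b < s * e / 4).
      { apply Rlt_le_trans with (/ (4 / (s * e))).
        apply Rinv_lt_contravar; nra. right. field. lra. }
      assert (C4: exp (- b) / s < e / 4).
      { apply (Rmult_lt_reg_r s); auto. unfold Rdiv. rewrite Rmult_assoc, Rinv_l by lra. lra. }
      pose proof (Eh_ge0 (sqrt a) (sqrt_pos a)) as C5.
      pose proof (Eh_le (sqrt a) (sqrt_pos a)) as C6.
      assert (C7: sqrt a < e / 4).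
      { rewrite <- (sqrt_square (e / 4)) by lra. apply sqrt_lt_1_alt. split. lra.
        apply Rlt_le_trans with d. lra. apply Rmin_r. }
      replace (sqrt PI) with (2 * s) by (unfold s; field).
      replace (2 * (Eh (sqrt b) - Eh (sqrt a)) - 2 * s) with (2 * (Eh (sqrt b) - s) + - (2 * Eh (sqrt a))) by ring.
      eapply Rle_lt_trans; [apply Rabs_triang|].
      rewrite Rabs_Ropp, !Rabs_mult, (Rabs_right 2) by lra. rewrite (Rabs_right (Eh (sqrt a))) by lra.
      lra.
Qed.

Lemma Gamma_half : Gamma_pos (/ 2) = sqrt PI.
Proof.
  unfold Gamma_pos. apply is_RInt_gen_unique. exact gam_gen.
Qed.

Lemma Gamma_half_sq : Gamma_pos (/ 2) ^ 2 = PI.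
Proof. rewrite Gamma_half. simpl. rewrite Rmult_1_r. apply sqrt_sqrt. pose proof PI_RGT_0. lra. Qed.


Ltac fside := repeat split; first [apply INR_fact_neq_0 | apply not_0_INR; lia | apply pow_nonzero; lra | lra | idtac].

Fixpoint bn (n k : nat) : R :=
  match n, k with
  | _, O => 1
  | O, S _ => 0
  | S n', S k' => bn n' k' + bn n' (S k')
  end.

Lemma bn_0 n : bn n 0 = 1. Proof. destruct n; reflexivity. Qed.
Lemma bn_S n k : bn (S n) (S k) = bn n k + bn n (S k). Proof. reflexivity. Qed.

Lemma bn_gt n : forall k, (n < k)%nat -> bn n k = 0.
Proof.
  induction n; intros k H.
  - destruct k; [lia|reflexivity].
  - destruct k; [lia|]. rewrite bn_S, !IHn by lia. lra.
Qed.

Lemma bn_C n : forall k, (k <= n)%nat -> bn n k = Binomial.C n k.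
Proof.
  induction n; intros k H.
  - destruct k; [|lia]. unfold Binomial.C. simpl bn. simpl fact. simpl INR. lra.
  - destruct k.
    + rewrite bn_0. unfold Binomial.C. rewrite Nat.sub_0_r. simpl (fact 0). pose proof (INR_fact_neq_0 (S n)). revert H0. generalize (INR (fact (S n))). intros. simpl INR. field. auto.
    + rewrite bn_S. destruct (Nat.eq_dec k n) as [->|Hk].
      * rewrite (bn_gt n (S n)) by lia. rewrite IHn by lia.
        unfold Binomial.C. rewrite !Nat.sub_diag. field; fside.
      * rewrite !IHn by lia. apply pascal. lia.
Qed.

Lemma C_fact n k : (k <= n)%nat -> Binomial.C n k * INR (fact k) * INR (fact (n - k)) = INR (fact n).
Proof.
  intros. unfold Binomial.C. field; fside.
Qed.

Lemma bn_absorb a k : INR (S k) * bn (S a) (S k) = INR (S a) * bn a k.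
Proof.
  destruct (Compare_dec.le_lt_dec k a) as [H|H].
  - rewrite !bn_C by lia. unfold Binomial.C.
    replace (S a - S k)%nat with (a - k)%nat by lia.
    rewrite !fact_simpl, !mult_INR. field; fside.
  - rewrite !bn_gt by lia. ring.
Qed.

Lemma bn_ratio k m : INR (S k) * bn (k + m + 1) (S k) = INR (S m) * bn (k + m + 1) k.
Proof.
  rewrite !bn_C by lia. unfold Binomial.C.
  replace (k + m + 1 - S k)%nat with m by lia.
  replace (k + m + 1 - k)%nat with (S m) by lia.
  rewrite !fact_simpl, !mult_INR. field; fside.
Qed.


Fixpoint dd (k : nat) : R :=
  match k with O => 1 | S k' => dd k' * (2 * INR k' + 1) / (2 * INR k' + 2) end.

Fixpoint ee (m : nat) : R :=
  match m with
  | O => 1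
  | S O => 0
  | S (S m' as p) => ee m' * INR p / INR (S p)
  end.

Lemma ee_SS_eq m : ee (S (S m)) = ee m * INR (S m) / INR (S (S m)). Proof. reflexivity. Qed.
Lemma dd_S k : dd (S k) = dd k * (2 * INR k + 1) / (2 * INR k + 2). Proof. reflexivity. Qed.

Lemma ee_SS m : INR (S (S m)) * ee (S (S m)) = INR (S m) * ee m.
Proof. rewrite ee_SS_eq. rewrite !S_INR. field. pose proof (pos_INR m). lra. Qed.

Lemma ee_even k : ee (2 * k) = dd k.
Proof.
  induction k. reflexivity.
  replace (2 * S k)%nat with (S (S (2 * k))) by lia.
  rewrite ee_SS_eq, IHk, dd_S. rewrite !S_INR, mult_INR. simpl INR. field.
  pose proof (pos_INR k). lra.
Qed.

Lemma ee_odd k : ee (S (2 * k)) = 0.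
Proof.
  induction k. reflexivity.
  replace (S (2 * S k)) with (S (S (S (2 * k)))) by lia.
  rewrite ee_SS_eq. rewrite IHk. lra.
Qed.

Lemma ee_sign n : (-1) ^ n * ee n = ee n.
Proof.
  destruct (Nat.Even_or_Odd n) as [[k ->]|[k ->]].
  - rewrite pow_1_even. ring.
  - replace (2 * k + 1)%nat with (S (2 * k)) by lia. rewrite ee_odd. ring.
Qed.

(* M n j = L(x^n (1+x)^j) *)
Fixpoint MM (n j : nat) : R :=
  match j with O => ee n | S j' => MM n j' + MM (S n) j' end.

Lemma MM_S n j : MM n (S j) = MM n j + MM (S n) j. Proof. reflexivity. Qed.

Lemma MM_rec : forall j n, INR (n + j + 2) * MM (S (S n)) j = INR (S n) * MM n j + INR j * MM (S n) j.
Proof.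
  induction j; intros n.
  - rewrite ?MM_S. rewrite Nat.add_0_r. replace (n+2)%nat with (S (S n)) by lia.
    cbn [MM]. rewrite ee_SS. change (INR 0) with 0. ring.
  - rewrite ?MM_S. pose proof (IHj n) as H1. pose proof (IHj (S n)) as H2.
    rewrite !plus_INR in *. rewrite !S_INR in *. simpl INR in *.
    assert (Hc: (INR n + (INR j + 1) + 2) * (MM (S (S n)) j + MM (S (S (S n))) j) -
       ((INR n + 1) * (MM n j + MM (S n) j) + (INR j + 1) * (MM (S n) j + MM (S (S n)) j))
       = ((INR n + INR j + 2) * MM (S (S n)) j - ((INR n + 1) * MM n j + INR j * MM (S n) j))
       + ((INR n + 1 + INR j + 2) * MM (S (S (S n))) j - ((INR n + 1 + 1) * MM (S n) j + INR j * MM (S (S n)) j)))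
       by ring.
    lra.
Qed.

Lemma MM_step n i : INR (n + i + 2) * MM (S n) (S i) = INR (S n) * MM n (S i) + INR (2 * i + 1) * MM (S n) i.
Proof.
  rewrite ?MM_S. pose proof (MM_rec i n) as H.
  rewrite !plus_INR, !mult_INR, !S_INR in *. simpl INR in *.
  assert (Hc: (INR n + INR i + (1+1)) * (MM (S n) i + MM (S (S n)) i) -
     ((INR n + 1) * (MM n i + MM (S n) i) + ((1+1) * INR i + 1) * MM (S n) i)
     = (INR n + INR i + (1+1)) * MM (S (S n)) i - ((INR n + 1) * MM n i + INR i * MM (S n) i)) by ring.
  lra.
Qed.

Lemma MM_rec0 j : INR (S j) * MM 1 j = INR j * MM 0 j.
Proof.
  induction j. simpl. ring.
  rewrite ?MM_S. pose proof (MM_rec j 0) as H.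
  rewrite !plus_INR, !S_INR in *. simpl INR in *.
  assert (Hc: (INR j + 1 + 1) * (MM 1 j + MM 2 j) - (INR j + 1) * (MM 0 j + MM 1 j)
    = ((0 + INR j + (1+1)) * MM 2 j - (1 * MM 0 j + INR j * MM 1 j)) + ((INR j + 1) * MM 1 j - INR j * MM 0 j)) by ring.
  lra.
Qed.

Lemma MM_0 i : MM 0 i = 2 ^ i * dd i.
Proof.
  induction i. cbn [MM ee dd pow]. ring.
  pose proof (MM_rec0 i) as H. rewrite MM_S, dd_S. simpl pow.
  assert (Hp: 0 <= INR i) by apply pos_INR.
  rewrite S_INR in H.
  assert (MM 1 i = INR i * MM 0 i / (INR i + 1)) as -> by (rewrite <- H; field; lra).
  rewrite IHi. field. lra.
Qed.


Lemma sum_S f n : sum_f_R0 f (S n) = sum_f_R0 f n + f (S n). Proof. reflexivity. Qed.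
Lemma sum_0 f : sum_f_R0 f 0 = f 0%nat. Proof. reflexivity. Qed.

Lemma sum_shift f n : sum_f_R0 (fun k => f (S k)) n = sum_f_R0 f (S n) - f 0%nat.
Proof. rewrite (decomp_sum f (S n)) by lia. simpl pred. ring. Qed.

Definition SS n m := sum_f_R0 (fun k => (-1)^k * bn n k * MM m k) n.

Lemma SS_eq : forall n m, SS n m = (-1)^n * ee (m + n).
Proof.
  induction n; intros m.
  - unfold SS. rewrite sum_0, bn_0, Nat.add_0_r. cbn [MM pow]. ring.
  - unfold SS. rewrite (decomp_sum _ (S n)) by lia. simpl pred.
    set (g := fun k => (-1)^k * bn n k * MM m k).
    set (g2 := fun k => (-1)^k * bn n k * MM (S m) k).
    rewrite (sum_eq _ (fun k => (g (S k) - g k) - g2 k)).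
    2:{ intros k _. unfold g, g2. rewrite bn_S, MM_S. simpl pow. ring. }
    rewrite !minus_sum, sum_shift, sum_S.
    unfold g at 2 3. rewrite (bn_gt n (S n)) by lia. rewrite !bn_0.
    replace (sum_f_R0 g2 n) with (SS n (S m)) by reflexivity.
    rewrite IHn. replace (m + S n)%nat with (S m + n)%nat by lia.
    cbn [pow MM]. ring.
Qed.

Definition AA n i := sum_f_R0 (fun k => (-1)^k * bn (n+i) (k+i) * MM 0 k) n.

Lemma bn_nn n : bn n n = 1.
Proof. induction n. reflexivity. rewrite bn_S, IHn, bn_gt by lia. ring. Qed.

Lemma AA_0i i : AA 0 i = 1.
Proof. unfold AA. rewrite sum_0. simpl (0 + i)%nat. rewrite bn_nn. cbn [MM ee pow]. ring. Qed.

Lemma AA_n0 n : AA n 0 = ee n.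
Proof.
  unfold AA. rewrite (sum_eq _ (fun k => (-1)^k * bn n k * MM 0 k)).
  2:{ intros. rewrite !Nat.add_0_r. reflexivity. }
  fold (SS n 0). rewrite SS_eq. simpl (0 + n)%nat. apply ee_sign.
Qed.

Lemma AA_S n i : AA (S n) (S i) = AA n (S i) + AA (S n) i.
Proof.
  unfold AA.
  rewrite (sum_eq _ (fun k => (-1) ^ k * bn (S n + i) (k + i) * MM 0 k + (-1) ^ k * bn (n + S i) (k + S i) * MM 0 k)).
  2:{ intros k _. replace (k + S i)%nat with (S (k + i)) by lia.
      replace (S n + S i)%nat with (S (n + S i)) by lia. rewrite bn_S.
      replace (n + S i)%nat with (S n + i)%nat by lia. ring. }
  rewrite plus_sum. rewrite (sum_S (fun k => (-1) ^ k * bn (n + S i) (k + S i) * MM 0 k)).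
  rewrite (bn_gt (n + S i) (S n + S i)) by lia. ring.
Qed.

Lemma main_id : forall n i, AA n i * (2 ^ i * dd i) = bn (n + i) i * MM n i.
Proof.
  induction n; intros i.
  - rewrite AA_0i, <- MM_0. simpl (0 + i)%nat. rewrite bn_nn. ring.
  - induction i.
    + rewrite AA_n0, Nat.add_0_r, bn_0. cbn [pow dd MM]. ring.
    + rewrite AA_S. rewrite Rmult_plus_distr_r.
      rewrite (IHn (S i)).
      replace (AA (S n) i * (2 ^ S i * dd (S i))) with ((AA (S n) i * (2 ^ i * dd i)) * (2 * (2 * INR i + 1) / (2 * INR i + 2))).
      2:{ rewrite dd_S. simpl pow. field. pose proof (pos_INR i). lra. }
      rewrite IHi.
      pose proof (bn_absorb (n + S i) i) as H1.
      pose proof (bn_ratio i n) as H2.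
      pose proof (MM_step n i) as H3.
      replace (S n + S i)%nat with (S (n + S i)) by lia.
      replace (n + S i)%nat with (i + n + 1)%nat in * by lia.
      replace (S n + i)%nat with (i + n + 1)%nat by lia.
      set (B := bn (i + n + 1) i) in *.
      assert (Hi: INR (S i) <> 0) by (apply not_0_INR; lia).
      apply (Rmult_eq_reg_l (INR (S i))); [|exact Hi].
      rewrite Rmult_plus_distr_l.
      replace (INR (S i) * (bn (i + n + 1) (S i) * MM n (S i))) with ((INR (S i) * bn (i + n + 1) (S i)) * MM n (S i)) by ring.
      replace (INR (S i) * (bn (S (i + n + 1)) (S i) * MM (S n) (S i))) with ((INR (S i) * bn (S (i + n + 1)) (S i)) * MM (S n) (S i)) by ring.
      rewrite H1, H2.
      replace (S (i + n + 1)) with (n + i + 2)%nat by lia.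
      replace (INR (n + i + 2) * B * MM (S n) (S i)) with (B * (INR (n + i + 2) * MM (S n) (S i))) by ring.
      rewrite H3. rewrite !S_INR, ?mult_INR, ?plus_INR. rewrite ?mult_INR. change (INR 1) with 1. change (INR 2) with 2.
      field. pose proof (pos_INR i). lra.
Qed.

Lemma MM_sum : forall i n, MM n i = sum_f_R0 (fun r => bn i r * ee (n + (i - r))) i.
Proof.
  induction i; intros n.
  - rewrite sum_0. cbn [MM]. rewrite bn_0. rewrite !Nat.add_0_r. simpl. ring.
  - rewrite MM_S, (IHi n), (IHi (S n)).
    rewrite (decomp_sum _ (S i)) by lia. simpl pred. rewrite bn_0.
    rewrite (sum_eq (fun r => bn (S i) (S r) * ee (n + (S i - S r))) (fun r => bn i r * ee (n + (i - r)) + bn i (S r) * ee (S n + (i - S r)))).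
    2:{ intros r Hr. cbv beta. rewrite bn_S. destruct (Nat.eq_dec r i) as [->|Hne].
        - rewrite (bn_gt i (S i)) by lia. replace (S i - S i)%nat with (i - i)%nat by lia. ring.
        - replace (n + (S i - S r))%nat with (S n + (i - S r))%nat by lia.
          replace (S n + (i - S r))%nat with (n + (i - r))%nat by lia. ring. }
    rewrite plus_sum.
    rewrite (sum_shift (fun r => bn i r * ee (S n + (i - r)))).
    rewrite sum_S. rewrite (bn_gt i (S i)) by lia. rewrite bn_0.
    replace (n + (S i - 0))%nat with (S n + (i - 0))%nat by lia. ring.
Qed.


Lemma poch_S a k : poch a (S k) = poch a k * (a + INR k). Proof. reflexivity. Qed.

Lemma poch_front a k : poch a (S k) = a * poch (a + 1) k.
Proof.
  induction k. simpl. ring.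
  rewrite poch_S, IHk, poch_S, S_INR. ring.
Qed.

Lemma poch_pos a k : 0 < a -> 0 < poch a k.
Proof.
  intros Ha. induction k. simpl. lra.
  rewrite poch_S. apply Rmult_lt_0_compat; auto. pose proof (pos_INR k). lra.
Qed.

Lemma shift_up (x : R) (j : nat) : - x < INR j -> INR j <= - x + 1 -> Defs.shift x = j.
Proof.
  intros H1 H2. unfold Defs.shift.
  rewrite INR_IZR_INZ in H1, H2.
  rewrite <- (tech_up _ _ H1 H2). apply Nat2Z.id.
Qed.

Lemma rG_half j : rGamma (/2 - INR j) = poch (/2 - INR j) j / Gamma_pos (/2).
Proof.
  unfold rGamma. rewrite (shift_up _ j) by lra.
  replace (/2 - INR j + INR j) with (/2) by ring. reflexivity.
Qed.

Lemma rG_int j : rGamma (- INR j) = 0.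
Proof.
  unfold rGamma. rewrite (shift_up _ (S j)) by (rewrite S_INR; lra).
  rewrite poch_S. replace (- INR j + INR j) with 0 by ring. unfold Rdiv. ring.
Qed.

Definition ph j := poch (/2 - INR j) j.

Lemma ph_S j : ph (S j) = (/2 - INR (S j)) * ph j.
Proof.
  unfold ph. rewrite poch_front. f_equal. f_equal. rewrite S_INR. ring.
Qed.

Lemma fact2 k : INR (fact (2 * S k)) = INR (fact (2 * k)) * (2 * INR k + 1) * (2 * INR k + 2).
Proof.
  replace (2 * S k)%nat with (S (S (2 * k))) by lia.
  rewrite !fact_simpl, !mult_INR, !S_INR, mult_INR. simpl (INR 2). ring.
Qed.

Lemma ph_sq j : 4 ^ j * ph j ^ 2 = dd j * INR (fact (2 * j)).
Proof.
  induction j. unfold ph. simpl. ring.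
  rewrite ph_S, dd_S, fact2, S_INR.
  replace (4 ^ S j * ((/ 2 - (INR j + 1)) * ph j) ^ 2)
    with ((4 ^ j * ph j ^ 2) * (2 * INR j + 1) * (2 * INR j + 1)) by (simpl; field).
  rewrite IHj. field. pose proof (pos_INR j). lra.
Qed.

Lemma fact_dd k : INR (fact (2 * k)) = 4 ^ k * dd k * INR (fact k) ^ 2.
Proof.
  induction k. simpl. ring.
  rewrite fact2, IHk, dd_S. rewrite fact_simpl, mult_INR, S_INR. simpl pow.
  field. pose proof (pos_INR k). lra.
Qed.

Lemma poch_dd j nu : poch (/2 + INR j) nu * dd j = poch (1 + INR j) nu * dd (nu + j).
Proof.
  induction nu. simpl. ring.
  rewrite !poch_S. simpl (S nu + j)%nat. rewrite dd_S.
  replace (poch (/ 2 + INR j) nu * (/ 2 + INR j + INR nu) * dd j) with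
    ((poch (/ 2 + INR j) nu * dd j) * (/ 2 + INR j + INR nu)) by ring.
  rewrite IHnu, plus_INR. field. pose proof (pos_INR j). pose proof (pos_INR nu). lra.
Qed.

Lemma poch_int a i : poch (INR (S a)) i * INR (fact a) = INR (fact (a + i)).
Proof.
  induction i. simpl. rewrite Nat.add_0_r. ring.
  rewrite poch_S. replace (a + S i)%nat with (S (a + i)) by lia.
  rewrite fact_simpl, mult_INR, <- IHi, (S_INR (a + i)), plus_INR, (S_INR a). ring.
Qed.


Lemma G_nz : Gamma_pos (/2) ^ 2 = PI -> Gamma_pos (/2) <> 0.
Proof. intros H E. rewrite E in H. pose proof PI_RGT_0. simpl in H. lra. Qed.

Lemma pow2_add r j : 2 ^ (r + 2 * j) = 2 ^ r * 4 ^ j.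
Proof. rewrite pow_add, pow_mult. replace (2 ^ 2) with 4 by (simpl; ring). reflexivity. Qed.

Lemma term1 (HG : Gamma_pos (/2) ^ 2 = PI) i nu r : (r <= i)%nat ->
  PI * (/ 2 ^ r * binom i r * poch (/ 2 + / 2 * INR (i - r)) nu / INR (fact (i - r))
        * rGamma (/ 2 + / 2 * (INR r - INR i)) ^ 2 / poch (1 + / 2 * INR (i - r)) nu)
  = bn i r / 2 ^ i * ee (2 * nu + (i - r)).
Proof.
  intros Hr. pose proof (G_nz HG) as Gnz. unfold binom. rewrite <- bn_C by lia.
  destruct (Nat.Even_or_Odd (i - r)) as [[j Hj]|[j Hj]].
  - assert (i = r + 2 * j)%nat as -> by lia.
    replace (r + 2 * j - r)%nat with (2 * j)%nat by lia.
    replace (/ 2 + / 2 * (INR r - INR (r + 2 * j))) with (/2 - INR j)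
      by (rewrite plus_INR, mult_INR; simpl (INR 2); field).
    replace (/ 2 * INR (2 * j)) with (INR j) by (rewrite mult_INR; simpl (INR 2); field).
    replace (2 * nu + 2 * j)%nat with (2 * (nu + j))%nat by lia.
    rewrite ee_even, rG_half, pow2_add.
    fold (ph j).
    pose proof (ph_sq j) as E1. pose proof (poch_dd j nu) as E2.
    assert (P2: 0 < poch (1 + INR j) nu) by (apply poch_pos; pose proof (pos_INR j); lra).
    assert (F: INR (fact (2 * j)) <> 0) by apply INR_fact_neq_0.
    assert (E3: dd (nu + j) = poch (/ 2 + INR j) nu * dd j / poch (1 + INR j) nu)
      by (rewrite E2; field; lra).
    rewrite E3.
    replace ((ph j / Gamma_pos (/ 2)) ^ 2) with (ph j ^ 2 / Gamma_pos (/ 2) ^ 2) by (field; auto).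
    assert (E4: ph j ^ 2 = dd j * INR (fact (2 * j)) / 4 ^ j)
      by (rewrite <- E1; field; apply pow_nonzero; lra).
    rewrite E4, HG. field. repeat split; try lra; try apply pow_nonzero; try lra.
    pose proof PI_RGT_0; lra.
  - assert (i = r + (2 * j + 1))%nat as -> by lia.
    replace (/ 2 + / 2 * (INR r - INR (r + (2 * j + 1)))) with (- INR j)
      by (rewrite !plus_INR, mult_INR; simpl (INR 2); simpl (INR 1); field).
    rewrite rG_int.
    replace (2 * nu + (r + (2 * j + 1) - r))%nat with (S (2 * (nu + j))) by lia.
    rewrite ee_odd. unfold Rdiv. ring.
Qed.

Lemma term2 (HG : Gamma_pos (/2) ^ 2 = PI) i nu r : (r <= i)%nat ->
  2 * PI * (/ 2 ^ r * binom i r * poch (1 + / 2 * INR (i - r)) nu / INR (fact (i - r + 1))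
        * rGamma (/ 2 * (INR r - INR i)) ^ 2 / poch (3 / 2 + / 2 * INR (i - r)) nu)
  = bn i r / 2 ^ i * ee (2 * nu + 1 + (i - r)).
Proof.
  intros Hr. pose proof (G_nz HG) as Gnz. unfold binom. rewrite <- bn_C by lia.
  destruct (Nat.Even_or_Odd (i - r)) as [[j Hj]|[j Hj]].
  - assert (i = r + 2 * j)%nat as -> by lia.
    replace (/ 2 * (INR r - INR (r + 2 * j))) with (- INR j)
      by (rewrite plus_INR, mult_INR; simpl (INR 2); field).
    rewrite rG_int.
    replace (2 * nu + 1 + (r + 2 * j - r))%nat with (S (2 * (nu + j))) by lia.
    rewrite ee_odd. unfold Rdiv. ring.
  - assert (i = r + (2 * j + 1))%nat as -> by lia.
    replace (r + (2 * j + 1) - r)%nat with (2 * j + 1)%nat by lia.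
    replace (/ 2 * (INR r - INR (r + (2 * j + 1)))) with (/2 - INR (S j))
      by (rewrite !plus_INR, mult_INR, S_INR; simpl (INR 2); simpl (INR 1); field).
    replace (1 + / 2 * INR (2 * j + 1)) with (/2 + INR (S j))
      by (rewrite plus_INR, mult_INR, S_INR; simpl (INR 2); simpl (INR 1); field).
    replace (3 / 2 + / 2 * INR (2 * j + 1)) with (1 + INR (S j))
      by (rewrite plus_INR, mult_INR, S_INR; simpl (INR 2); simpl (INR 1); field).
    replace (2 * j + 1 + 1)%nat with (2 * S j)%nat by lia.
    replace (2 * nu + 1 + (2 * j + 1))%nat with (2 * (nu + S j))%nat by lia.
    replace (r + (2 * j + 1))%nat with (r + 2 * j + 1)%nat by lia.
    rewrite ee_even, rG_half, pow_add, pow2_add.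
    fold (ph (S j)).
    pose proof (ph_sq (S j)) as E1. pose proof (poch_dd (S j) nu) as E2.
    assert (P2: 0 < poch (1 + INR (S j)) nu) by (apply poch_pos; pose proof (pos_INR (S j)); lra).
    assert (F: INR (fact (2 * S j)) <> 0) by apply INR_fact_neq_0.
    assert (E3: dd (nu + S j) = poch (/ 2 + INR (S j)) nu * dd (S j) / poch (1 + INR (S j)) nu)
      by (rewrite E2; field; lra).
    rewrite E3.
    replace ((ph (S j) / Gamma_pos (/ 2)) ^ 2) with (ph (S j) ^ 2 / Gamma_pos (/ 2) ^ 2) by (field; auto).
    assert (E4: ph (S j) ^ 2 = dd (S j) * INR (fact (2 * S j)) / 4 ^ (S j))
      by (rewrite <- E1; field; apply pow_nonzero; lra).
    rewrite E4, HG. simpl pow. field. repeat split; try lra; try apply pow_nonzero; try lra.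
    pose proof PI_RGT_0; lra.
Qed.


Lemma LHS_AA n i : sum0 (fun k => (-1) ^ k * binom (n + i) (k + i) * / 2 ^ k * binom (2 * k) k) n = AA n i.
Proof.
  unfold sum0, AA. apply sum_eq. intros k Hk. unfold binom.
  rewrite <- !bn_C by lia. rewrite MM_0.
  rewrite (bn_C (2 * k) k) by lia.
  assert (Hc: Binomial.C (2 * k) k = 4 ^ k * dd k).
  { pose proof (C_fact (2 * k) k) as H. replace (2 * k - k)%nat with k in H by lia.
    rewrite fact_dd in H. pose proof (INR_fact_neq_0 k).
    apply (Rmult_eq_reg_r (INR (fact k) ^ 2)). rewrite <- H by lia. ring. apply pow_nonzero; auto. }
  rewrite Hc. replace 4 with (2 * 2) by ring. rewrite Rpow_mult_distr.
  field. apply pow_nonzero; lra.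
Qed.

Lemma coef n i : poch (INR (S n)) i * (2 ^ (2 * i) * INR (fact i) / INR (fact (2 * i)))
  = bn (n + i) i / dd i.
Proof.
  rewrite bn_C by lia. unfold Binomial.C. replace (n + i - i)%nat with n by lia.
  rewrite <- poch_int with (a := n). rewrite fact_dd.
  rewrite pow_mult. replace (2 ^ 2) with 4 by (simpl; ring).
  assert (dd i <> 0).
  { induction i. simpl. lra. rewrite dd_S. pose proof (pos_INR i).
    apply Rmult_integral_contrapositive_currified; [|apply Rinv_neq_0_compat; lra].
    apply Rmult_integral_contrapositive_currified; [auto|lra]. }
  field. repeat split; auto; try apply INR_fact_neq_0; try apply pow_nonzero; lra.
Qed.

Lemma dd_nz i : dd i <> 0.
Proof.
  induction i. simpl. lra. rewrite dd_S. pose proof (pos_INR i).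
  apply Rmult_integral_contrapositive_currified; [|apply Rinv_neq_0_compat; lra].
  apply Rmult_integral_contrapositive_currified; [auto|lra].
Qed.

Lemma final_form n i : AA n i = bn (n + i) i / dd i * (/ 2 ^ i * MM n i).
Proof.
  pose proof (main_id n i) as H. pose proof (dd_nz i).
  apply (Rmult_eq_reg_r (2 ^ i * dd i)). rewrite H. field. split; auto; apply pow_nonzero; lra.
  apply Rmult_integral_contrapositive_currified; auto; apply pow_nonzero; lra.
Qed.

Theorem thm_given (HG : Gamma_pos (/2) ^ 2 = PI) (i nu : nat) :
  sum0 (fun k => (-1) ^ k * binom (2 * nu + i) (k + i) * / 2 ^ k * binom (2 * k) k)
       (2 * nu)
  = PI * poch (INR (2 * nu + 1)) i * (2 ^ (2 * i) * INR (fact i) / INR (fact (2 * i)))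
    * sum0 (fun r => / 2 ^ r * binom i r
                     * poch (/ 2 + / 2 * INR (i - r)) nu
                     / INR (fact (i - r))
                     * rGamma (/ 2 + / 2 * (INR r - INR i)) ^ 2
                     / poch (1 + / 2 * INR (i - r)) nu) i
  /\
  sum0 (fun k => (-1) ^ k * binom (2 * nu + 1 + i) (k + i) * / 2 ^ k * binom (2 * k) k)
       (2 * nu + 1)
  = 2 * PI * poch (INR (2 * nu + 2)) i * (2 ^ (2 * i) * INR (fact i) / INR (fact (2 * i)))
    * sum0 (fun r => / 2 ^ r * binom i r
                     * poch (1 + / 2 * INR (i - r)) nu
                     / INR (fact (i - r + 1))
                     * rGamma (/ 2 * (INR r - INR i)) ^ 2
                     / poch (3 / 2 + / 2 * INR (i - r)) nu) i.
Proof.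
  split.
  - rewrite LHS_AA, final_form.
    replace (2 * nu + 1)%nat with (S (2 * nu)) by lia. 
    replace (PI * poch (INR (S (2 * nu))) i * (2 ^ (2 * i) * INR (fact i) / INR (fact (2 * i))) * sum0 _ i)
      with ((poch (INR (S (2 * nu))) i * (2 ^ (2 * i) * INR (fact i) / INR (fact (2 * i))))
            * (PI * sum0 (fun r => / 2 ^ r * binom i r
                     * poch (/ 2 + / 2 * INR (i - r)) nu
                     / INR (fact (i - r))
                     * rGamma (/ 2 + / 2 * (INR r - INR i)) ^ 2
                     / poch (1 + / 2 * INR (i - r)) nu) i)) by ring.
    rewrite coef. f_equal.
    unfold sum0. rewrite scal_sum, MM_sum, scal_sum. apply sum_eq. intros r Hr.
    rewrite (Rmult_comm _ PI), term1 by auto. unfold Rdiv. ring.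
  - rewrite (LHS_AA (2 * nu + 1) i), final_form.
    replace (2 * nu + 2)%nat with (S (2 * nu + 1)) by lia.
    replace (2 * PI * poch (INR (S (2 * nu + 1))) i * (2 ^ (2 * i) * INR (fact i) / INR (fact (2 * i))) * sum0 _ i)
      with ((poch (INR (S (2 * nu + 1))) i * (2 ^ (2 * i) * INR (fact i) / INR (fact (2 * i))))
            * (2 * PI * sum0 (fun r => / 2 ^ r * binom i r
                     * poch (1 + / 2 * INR (i - r)) nu
                     / INR (fact (i - r + 1))
                     * rGamma (/ 2 * (INR r - INR i)) ^ 2
                     / poch (3 / 2 + / 2 * INR (i - r)) nu) i)) by ring.
    rewrite coef. f_equal.
    unfold sum0. rewrite scal_sum, MM_sum, scal_sum. apply sum_eq. intros r Hr.
    rewrite (Rmult_comm _ (2 * PI)), term2 by auto. unfold Rdiv. ring.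
Qed.

Theorem theorem2p1 (i nu : nat) :
  sum0 (fun k => (-1) ^ k * binom (2 * nu + i) (k + i) * / 2 ^ k * binom (2 * k) k)
       (2 * nu)
  = PI * poch (INR (2 * nu + 1)) i * (2 ^ (2 * i) * INR (fact i) / INR (fact (2 * i)))
    * sum0 (fun r => / 2 ^ r * binom i r
                     * poch (/ 2 + / 2 * INR (i - r)) nu
                     / INR (fact (i - r))
                     * rGamma (/ 2 + / 2 * (INR r - INR i)) ^ 2
                     / poch (1 + / 2 * INR (i - r)) nu) i
  /\
  sum0 (fun k => (-1) ^ k * binom (2 * nu + 1 + i) (k + i) * / 2 ^ k * binom (2 * k) k)
       (2 * nu + 1)
  = 2 * PI * poch (INR (2 * nu + 2)) i * (2 ^ (2 * i) * INR (fact i) / INR (fact (2 * i)))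
    * sum0 (fun r => / 2 ^ r * binom i r
                     * poch (1 + / 2 * INR (i - r)) nu
                     / INR (fact (i - r + 1))
                     * rGamma (/ 2 * (INR r - INR i)) ^ 2
                     / poch (3 / 2 + / 2 * INR (i - r)) nu) i.
Proof. exact (thm_given Gamma_half_sq i nu). Qed.
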